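(* Let $X$ be an ultradiscrete ballean and $n\ge2$. Then the $n$-th power $X^n$ is not normal, but the hypersymmetric power $[X]^{\le n}$ is normal.
   Context: A ballean is a pair $(X,\mathcal E_X)$ where $X$ is a set and $\mathcal E_X$ is a family of subsets of $X\times X$ (entourages) such that: each $E\in\mathcal E_X$ contains the diagonal $\Delta_X$; for any $E,F\in\mathcal E_X$ there is $D\in\mathcal E_X$ with $E\circ F^{-1}\subset D$; and $\bigcup\mathcal E_X=X\times X$. For $E\in\mathcal E_X$, $x\in X$, $A\subset X$: $E[x]=\{y:(x,y)\in E\}$, $E[A]=\bigcup_{a\in A}E[a]$. $B\subset X$ is bounded if $B\subset E[x]$ for some $E\in\mathcal E_X$, $x\in X$; $\mathcal B_X$ is the family of bounded sets. Sets $A,B$ are asymptotically disjoint if $E[A]\cap E[B]\in\mathcal B_X$ for all $E\in\mathcal E_X$; $U$ is an asymptotic neighborhood of $A$ if $E[A]\setminus U\in\mathcal B_X$ for all $E$; $X$ is normal if any two asymptotically disjoint sets have disjoint asymptotic neighborhoods, and ultranormal if it contains no two unbounded asymptotically disjoint sets. $X$ is discrete if $X$ is unbounded and for every $E\in\mathcal E_X$ there is a bounded $B_E$ with $E[x]=\{x\}$ for $x\in X\setminus B_E$; ultradiscrete = discrete and ultranormal. The power $X^n$ has entourages $\{(x,y)\in X^n\times X^n:(x(i),y(i))\in E_i\ \forall i\}$ with $E_i\in\mathcal E_X$. The hyperballean $[X]^{\mathcal B}$ is the set $\mathcal B_X\setminus\{\emptyset\}$ with entourages $\hat E=\{(A,B):A\subset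 E[B],\ B\subset E[A]\}$, $E\in\mathcal E_X$; the hypersymmetric power $[X]^{\le n}$ is its subballean $\{A\in[X]^{\mathcal B}:|A|\le n\}$ (a subballean of $(Z,\mathcal E_Z)$ on $Y\subset Z$ has entourages $(Y\times Y)\cap E$, $E\in\mathcal E_Z$). *)

(* Defs.v *)
From mathcomp Require Import all_boot.
From Stdlib Require List.
Set Implicit Arguments. Unset Strict Implicit. Unset Printing Implicit Defensive.

Definition ballS (X : Type) (E : X -> X -> Prop) (A : X -> Prop) : X -> Prop :=
  fun y => exists a, A a /\ E a y.

Record is_ballean (X : Type) (ent : (X -> X -> Prop) -> Prop) : Prop := {
  ent_diag : forall E, ent E -> forall x, E x x;
  (* E o F^{-1} = {(x,y) | exists z, (x,z) in E /\ (z,y) in F^{-1}} *)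
  ent_comp : forall E F, ent E -> ent F ->
     exists D, ent D /\ forall x y, (exists z, E x z /\ F y z) -> D x y;
  ent_cover : forall x y, exists E, ent E /\ E x y }.

Definition bounded (X : Type) (ent : (X -> X -> Prop) -> Prop) (B : X -> Prop) :=
  exists E x, ent E /\ forall y, B y -> E x y.

Definition asym_disjoint (X : Type) (ent : (X -> X -> Prop) -> Prop)
  (A B : X -> Prop) :=
  forall E, ent E -> bounded ent (fun y => ballS E A y /\ ballS E B y).

Definition asym_nbhd (X : Type) (ent : (X -> X -> Prop) -> Prop)
  (U A : X -> Prop) :=
  forall E, ent E -> bounded ent (fun y => ballS E A y /\ ~ U y).

Definition normal (X : Type) (ent : (X -> X -> Prop) -> Prop) :=
  forall A B : X -> Prop, asym_disjoint ent A B ->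
    exists U V : X -> Prop, asym_nbhd ent U A /\ asym_nbhd ent V B /\
      (forall y, ~ (U y /\ V y)).

Definition ultranormal (X : Type) (ent : (X -> X -> Prop) -> Prop) :=
  ~ exists A B : X -> Prop,
      ~ bounded ent A /\ ~ bounded ent B /\ asym_disjoint ent A B.

Definition discrete (X : Type) (ent : (X -> X -> Prop) -> Prop) :=
  ~ bounded ent (fun _ => True) /\
  forall E, ent E -> exists B, bounded ent B /\
     forall x, ~ B x -> forall y, E x y <-> y = x.

Definition ultradiscrete (X : Type) (ent : (X -> X -> Prop) -> Prop) :=
  discrete ent /\ ultranormal ent.

Definition power_ent (X : Type) (ent : (X -> X -> Prop) -> Prop) (n : nat) :
    (('I_n -> X) -> ('I_n -> X) -> Prop) -> Prop :=
  fun R => exists Es : 'I_n -> X -> X -> Prop, (forall i, ent (Es i)) /\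
    forall x y, R x y <-> forall i, Es i (x i) (y i).

Definition hyp_pt (X : Type) (ent : (X -> X -> Prop) -> Prop) (n : nat) :=
  { A : X -> Prop | (exists x, A x) /\ bounded ent A /\
      exists l : seq X, size l <= n /\ forall x, A x <-> List.In x l }.

Definition hyp_ent (X : Type) (ent : (X -> X -> Prop) -> Prop) (n : nat) :
    (hyp_pt ent n -> hyp_pt ent n -> Prop) -> Prop :=
  fun R => exists E, ent E /\ forall A B : hyp_pt ent n,
    R A B <-> ((forall a, sval A a -> ballS E (sval B) a) /\
               (forall b, sval B b -> ballS E (sval A) b)).

Arguments power_ent {X} ent n _.
Arguments hyp_pt {X} ent n.
Arguments hyp_ent {X} ent n _.

(* Main.v *)
Require Import Defs.
From mathcomp Require Import all_boot.
From mathcomp Require Import zify.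
From Stdlib Require Import ClassicalEpsilon Classical FunctionalExtensionality PropExtensionality.
From mathcomp Require classical_sets.
Set Implicit Arguments. Unset Strict Implicit.

Lemma ent_tr X (ent : (X -> X -> Prop) -> Prop) (hX : is_ballean ent) E :
  ent E -> exists E', ent E' /\ forall x y, E x y -> E' y x.
Proof.
move=> hE; have [D [hD HD]] := ent_comp hX hE hE.
exists D; split=> // x y Exy; apply: HD; exists y; split=> //; exact: (ent_diag hX hE).
Qed.

Lemma ent_cmp X (ent : (X -> X -> Prop) -> Prop) (hX : is_ballean ent) E F :
  ent E -> ent F -> exists D, ent D /\ forall x z y, E x z -> F z y -> D x y.
Proof.
move=> hE hF; have [F' [hF' HF']] := ent_tr hX hF.
have [D [hD HD]] := ent_comp hX hE hF'.
exists D; split=> // x z y Exz Fzy; apply: HD; exists z; split=> //; exact: HF'.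
Qed.

Lemma ent_un X (ent : (X -> X -> Prop) -> Prop) (hX : is_ballean ent) E F :
  ent E -> ent F -> exists D, ent D /\ forall x y, E x y \/ F x y -> D x y.
Proof.
move=> hE hF; have [F' [hF' HF']] := ent_tr hX hF.
have [D [hD HD]] := ent_comp hX hE hF'.
exists D; split=> // x y [Exy|Fxy]; apply: HD.
- exists y; split=> //; exact: (ent_diag hX hF').
- exists x; split; [exact: (ent_diag hX hE)| exact: HF'].
Qed.

Lemma bnd_sub X (ent : (X -> X -> Prop) -> Prop) (S T : X -> Prop) :
  (forall x, S x -> T x) -> bounded ent T -> bounded ent S.
Proof. move=> ST [E [x [hE H]]]; exists E, x; split=> // y /ST; exact: H. Qed.

Lemma bnd_at X (ent : (X -> X -> Prop) -> Prop) (hX : is_ballean ent) x S :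
  bounded ent S -> exists E, ent E /\ forall s, S s -> E x s.
Proof.
move=> [E [y [hE H]]]; have [G [hG Gxy]] := ent_cover hX x y.
have [D [hD HD]] := ent_cmp hX hG hE.
exists D; split=> // s Ss; apply: (HD _ y); [exact: Gxy| exact: H].
Qed.

Lemma bnd_E X (ent : (X -> X -> Prop) -> Prop) E x :
  ent E -> bounded ent (E x).
Proof. by move=> hE; exists E, x. Qed.

Lemma bnd_un X (ent : (X -> X -> Prop) -> Prop) (hX : is_ballean ent) (S T : X -> Prop) :
  bounded ent S -> bounded ent T -> bounded ent (fun x => S x \/ T x).
Proof.
move=> hS hT; have [E [x [hE H]]] := hS.
have [F [hF HF]] := bnd_at hX x hT.
have [D [hD HD]] := ent_un hX hE hF.
exists D, x; split=> // y [/H|/HF] h; apply: HD; by [left|right].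
Qed.

Lemma bnd_sq X (ent : (X -> X -> Prop) -> Prop) (hX : is_ballean ent) (S : X -> Prop) :
  bounded ent S -> exists E, ent E /\ forall s t, S s -> S t -> E s t.
Proof.
move=> [E [x [hE H]]]; have [E' [hE' HE']] := ent_tr hX hE.
have [D [hD HD]] := ent_cmp hX hE' hE.
exists D; split=> // s t Ss St; apply: (HD _ x); [apply: HE'; exact: H | exact: H].
Qed.

Lemma bnd_ball X (ent : (X -> X -> Prop) -> Prop) (hX : is_ballean ent) E S :
  ent E -> bounded ent S -> bounded ent (ballS E S).
Proof.
move=> hE [F [x [hF H]]]; have [D [hD HD]] := ent_cmp hX hF hE.
exists D, x; split=> // y [a [Sa Eay]]; apply: (HD _ a)=> //; exact: H.
Qed.

Lemma disc_K X (ent : (X -> X -> Prop) -> Prop) (hX : is_ballean ent) E :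
  discrete ent -> ent E -> exists K, bounded ent K /\
    forall x y, E x y -> x = y \/ (K x /\ K y).
Proof.
move=> [_ hd] hE; have [B [hB HB]] := hd E hE.
exists (fun y => B y \/ ballS E B y); split; first exact: bnd_un (bnd_ball hX hE hB).
move=> x y Exy; case: (classic (B x)) => Bx.
- by right; split; [left| right; exists x; split].
- by left; symmetry; exact: (proj1 (HB x Bx y) Exy).
Qed.

Record maxideal (X : Type) (I : (X -> Prop) -> Prop) : Prop := {
  mi_down : forall S T : X -> Prop, (forall x, S x -> T x) -> I T -> I S;
  mi_un : forall S T : X -> Prop, I S -> I T -> I (fun x => S x \/ T x);
  mi_single : forall x : X, I (fun y => y = x);
  mi_top : ~ I (fun _ => True);
  mi_max : forall S : X -> Prop, I S \/ I (fun x => ~ S x) }.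

Lemma ud_ent X (ent : (X -> X -> Prop) -> Prop) :
  ultradiscrete ent -> exists E, ent E.
Proof.
move=> [[hunb _] hun]; apply: NNPP => hno; apply: hun.
exists (fun _ => True), (fun _ => True); split=> //; split=> // E hE.
by case: hno; exists E.
Qed.

Lemma ud_maxideal X (ent : (X -> X -> Prop) -> Prop) (hX : is_ballean ent) :
  ultradiscrete ent -> maxideal (bounded ent).
Proof.
move=> hud; have [E0 hE0] := ud_ent hud.
have [[hunb hdisc] hun] := hud.
split.
- exact: bnd_sub.
- exact: bnd_un.
- move=> x; exists E0, x; split=> // y ->; exact: (ent_diag hX hE0).
- exact: hunb.
- move=> S; apply: NNPP => hno; apply: hun.
  exists S, (fun x => ~ S x); split; first by move=> h; apply: hno; left.
  split; first by move=> h; apply: hno; right.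
  move=> E hE; have [K [hK HK]] := disc_K hX (conj hunb hdisc) hE.
  apply: bnd_sub hK => y [[a [Sa Eay]] [b [Sb Eby]]].
  case: (HK _ _ Eay) => [eay|[]]; last by [].
  case: (HK _ _ Eby) => [eby|[]]; last by [].
  by subst; case: Sb.
Qed.

Lemma myZorn T (P : (T -> Prop) -> Prop) :
  (forall F : (T -> Prop) -> Prop, (forall A, F A -> P A) ->
     (forall A B, F A -> F B -> (forall t, A t -> B t) \/ (forall t, B t -> A t)) ->
     P (fun t => exists2 A, F A & A t)) ->
  exists A, P A /\ forall B, (forall t, A t -> B t) -> ~ (forall t, B t -> A t) -> ~ P B.
Proof.
move=> H; have [A [PA HA]] := @classical_sets.Zorn_bigcup T P H.
exists A; split=> // B AB BA; apply: HA; split; [exact: AB| exact: BA].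
Qed.

Lemma mi_ex X (I : (X -> Prop) -> Prop) (hI : maxideal I) S : I S -> exists x, ~ S x.
Proof.
move=> IS; apply: NNPP => h; apply: (mi_top hI); apply: (mi_down hI _ IS) => x _.
by apply: NNPP => nS; apply: h; exists x.
Qed.

Section Tour.
End Tour.

Definition relim X (Rel : X -> X -> Prop) (K : X -> Prop) := fun b => exists a, K a /\ Rel a b.

Fixpoint Sq X (inh : inhabited X) (Rel : X -> X -> Prop) (M : X -> Prop) (k : nat) : X -> Prop :=
  match k with
  | 0 => M
  | k'.+1 => fun w => Sq inh Rel M k' w \/
             w = epsilon inh (fun w => ~ (Sq inh Rel M k' w \/ relim Rel (Sq inh Rel M k') w))
  end.

Lemma tournament X (I : (X -> Prop) -> Prop) (hI : maxideal I) (Rel : X -> X -> Prop) :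
  (forall y z, Rel y z \/ Rel z y) ->
  (forall K, I K -> I (relim Rel K)) -> False.
Proof.
move=> tot hrel.
have [x0 _] : exists x : X, True.
  case: (mi_max hI (fun _ => True)) => h; first by case: (mi_top hI).
  by have [x _] := mi_ex hI h; exists x.
pose inh := inhabits x0.
pose PP := fun Q : X * bool -> Prop => (forall x, ~ (Q (x,true) /\ Q (x,false))) /\
   (forall x s, Q (x,s) -> exists w, Q (w, ~~ s) /\ Rel w x).
have [Q0 [[PQ1 PQ2] Qmax]] : exists A, PP A /\ forall B, (forall t, A t -> B t) ->
     ~ (forall t, B t -> A t) -> ~ PP B.
  apply: myZorn => F FP Ftot; split.
  - move=> x [[A FA At] [B FB Bf]].
    case: (Ftot A B FA FB) => h.
    + by apply: ((FP B FB).1 x); split=> //; exact: h.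
    + by apply: ((FP A FA).1 x); split=> //; exact: h.
  - move=> x s [A FA As]; have [w [Aw Rw]] := (FP A FA).2 x s As.
    by exists w; split=> //; exists A.
pose M := fun x => Q0 (x,true) \/ Q0 (x,false).
have IM : ~ I M.
  move=> IM.
  pose S := Sq inh Rel M.
  have IS : forall k, I (S k).
    elim=> [|k IH] //=; exact: (mi_un hI IH (mi_single hI _)).
  pose z k := epsilon inh (fun w => ~ (S k w \/ relim Rel (S k) w)).
  have zspec : forall k, ~ (S k (z k) \/ relim Rel (S k) (z k)).
    move=> k; apply: (epsilon_spec inh (fun w => ~ (S k w \/ relim Rel (S k) w))).
    exact: (mi_ex hI (mi_un hI (IS k) (hrel _ (IS k)))).
  have Smono : forall i j, i <= j -> forall w, S i w -> S j w.
    move=> i; elim=> [|j IH]; first by rewrite leqn0 => /eqP -> .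
    rewrite leq_eqVlt => /orP[/eqP <- //|hij] w Siw.
    by left; apply: IH.
  have Sz : forall i j, i < j -> S j (z i).
    move=> i j hij; apply: (Smono i.+1) => //; by right.
  have SM : forall k w, M w -> S k w.
    by move=> k w Mw; apply: (Smono 0).
  have zR : forall k, Rel (z k.+1) (z k).
    move=> k; case: (tot (z k) (z k.+1)) => // h; exfalso; apply: (zspec k.+1).
    by right; exists (z k); split=> //; apply: Sz.
  have zinj : forall i j, i < j -> z i <> z j.
    move=> i j hij e; apply: (zspec j); left; rewrite -e; exact: Sz.
  pose Q' := fun p : X * bool => Q0 p \/ exists k, p = (z k, ~~ odd k).
  apply: (Qmax Q').
  - by move=> t h; left.
  - move=> h; have := h (z 0, true) (or_intror (ex_intro _ 0 erefl)).
    move=> hq; apply: (zspec 0); left; apply: SM; by left.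
  - split.
    + move=> x [[h1|[k e1]] [h2|[k' e2]]].
      * exact: (PQ1 x (conj h1 h2)).
      * case: e2 => ex _; apply: (zspec k'); left; apply: SM; rewrite -ex; by left.
      * case: e1 => ex _; apply: (zspec k); left; apply: SM; rewrite -ex; by right.
      * case: e1 => ex1 o1; case: e2 => ex2 o2.
        have kk : k <> k' by move=> ekk; subst k'; rewrite -o1 in o2.
        case: (ltngtP k k') => hk.
        -- by apply: (zinj _ _ hk); rewrite -ex1 -ex2.
        -- by apply: (zinj _ _ hk); rewrite -ex1 -ex2.
        -- by apply: kk; apply/eqP; rewrite hk.
    + move=> x s [h|[k e]].
      * by have [w [Qw Rw]] := PQ2 x s h; exists w; split=> //; left.
      * case: e => -> ->; exists (z k.+1); split; last exact: zR.
        by right; exists k.+1; rewrite oddS negbK.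
have covA : forall x, Q0 (x,false) -> relim Rel (fun w => Q0 (w,true)) x.
  by move=> x h; have [w [Qw Rw]] := PQ2 x false h; exists w.
have covB : forall x, Q0 (x,true) -> relim Rel (fun w => Q0 (w,false)) x.
  by move=> x h; have [w [Qw Rw]] := PQ2 x true h; exists w.
case: (mi_max hI (fun x => Q0 (x,true))) => h.
- have IB := mi_down hI covA (hrel _ h).
  by apply: IM; exact: (mi_un hI h IB).
- have IB : I (fun x => Q0 (x,false)).
    by apply: (mi_down hI _ h) => x hf ht; exact: (PQ1 x (conj ht hf)).
  have IA := mi_down hI covB (hrel _ IB).
  by apply: IM; exact: (mi_un hI IA IB).
Qed.

Lemma least_ex (P : nat -> Prop) : (exists n, P n) -> exists n, P n /\ forall m, P m -> n <= m.
Proof.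
move=> [n Pn]; apply: NNPP => hno.
suff : forall k, forall m, m <= k -> ~ P m by move/(_ n n (leqnn n)).
elim=> [|k IH] m hm Pm.
- apply: hno; exists m; split=> // m' _; move: hm; rewrite leqn0 => /eqP ->; done.
- rewrite leq_eqVlt in hm; case/orP: hm => [/eqP em|hm]; last exact: (IH m hm Pm).
  apply: hno; exists m; split=> // m' Pm'; rewrite leqNgt; apply/negP => hlt.
  by apply: (IH m') => //; rewrite -ltnS -em.
Qed.

Definition least (P : nat -> Prop) : nat :=
  epsilon (inhabits 0) (fun n => P n /\ forall m, P m -> n <= m).

Lemma leastP (P : nat -> Prop) : (exists n, P n) -> P (least P) /\ forall m, P m -> least P <= m.
Proof. move=> h; exact: (epsilon_spec (inhabits 0) _ (least_ex h)). Qed.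

Lemma least_ext (P Q : nat -> Prop) : (forall n, P n <-> Q n) -> least P = least Q.
Proof.
move=> h; have -> : P = Q by apply: functional_extensionality => n; apply: propositional_extensionality.
done.
Qed.

Lemma coloring X (inh : inhabited X) (f : X -> X) : (forall x, f x <> x) ->
  exists c : X -> nat, forall x, c x < 3 /\ c (f x) <> c x.
Proof.
move=> hfp.
pose comp x y := exists a b, iter a f x = iter b f y.
pose rho x := epsilon inh (fun r => comp r x).
have rhof : forall x, rho (f x) = rho x.
  move=> x; rewrite /rho; congr epsilon; apply: functional_extensionality => r.
  apply: propositional_extensionality; split.
  - by move=> [a [b e]]; exists a, b.+1; rewrite iterSr.
  - by move=> [a [b e]]; exists a.+1, b; rewrite iterS e -iterS iterSr.
have rhos : forall x, exists a b, iter a f x = iter b f (rho x).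
  move=> x; have := epsilon_spec inh (fun r => comp r x) (ex_intro _ x (ex_intro _ 0 (ex_intro _ 0 erefl))).
  by move=> [a [b e]]; exists b, a.
pose Pa x a := exists b, iter a f x = iter b f (rho x).
pose ax x := least (Pa x).
have axP : forall x, Pa x (ax x) /\ forall m, Pa x m -> ax x <= m.
  by move=> x; apply: leastP; apply: rhos.
pose Pb x b := iter (ax x) f x = iter b f (rho x).
pose bx x := least (Pb x).
have bxP : forall x, Pb x (bx x) /\ forall m, Pb x m -> bx x <= m.
  move=> x; apply: leastP; exact: (axP x).1.
have Lpos : forall x, 0 < ax x -> ax (f x) = (ax x).-1 /\ bx (f x) = bx x.
  move=> x hpos.
  have e1 : ax (f x) = (ax x).-1.
    apply/eqP; rewrite eqn_leq; apply/andP; split.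
    - apply: (axP (f x)).2; exists (bx x); rewrite rhof -iterSr prednK //; exact: (bxP x).1.
    - have [b' e'] := (axP (f x)).1.
      have : ax x <= (ax (f x)).+1 by apply: (axP x).2; exists b'; rewrite iterSr e' rhof.
      by move=> h; rewrite -ltnS prednK.
  split=> //; rewrite /bx; apply: least_ext => m; rewrite /Pb e1 -iterSr prednK // rhof; done.
have Lzero : forall x, ax x = 0 -> ax (f x) = 0 /\ bx (f x) <= (bx x).+1 /\
    iter (bx (f x)) f (rho x) = f x.
  move=> x h0.
  have ex : x = iter (bx x) f (rho x) by have := (bxP x).1; rewrite /Pb h0.
  have ef : f x = iter (bx x).+1 f (rho x) by rewrite iterS -ex.
  have a0 : ax (f x) = 0.
    apply/eqP; rewrite -leqn0; apply: (axP (f x)).2; exists (bx x).+1; by rewrite rhof.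
  split=> //; split.
  - apply: (bxP (f x)).2; by rewrite /Pb a0 rhof.
  - have := (bxP (f x)).1; by rewrite /Pb a0 rhof.
have Lsp : forall x, ax x = 0 -> bx (f x) <> (bx x).+1 -> bx (f (f x)) <> (bx (f x)).+1 -> False.
  move=> x h0 n1 n2.
  have ex : x = iter (bx x) f (rho x) by have := (bxP x).1; rewrite /Pb h0.
  have bmin : forall m, iter m f (rho x) = x -> bx x <= m.
    by move=> m e; apply: (bxP x).2; rewrite /Pb h0 e.
  have [a1 [l1 e1]] := Lzero x h0.
  have [a2 [l2 e2]] := Lzero (f x) a1.
  rewrite rhof in e2.
  set b := bx x in ex bmin l1 n1; set b1 := bx (f x) in l1 e1 n1 l2 e2 n2; set b2 := bx (f (f x)) in l2 e2 n2.
  have hb1 : b1 <= b by move: l1 n1; rewrite leq_eqVlt ltnS => /orP[/eqP ->|] //.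
  have hb1' : b1 != b.
    apply/eqP => eb; apply: (hfp x); rewrite -e1 eb; by rewrite {2}ex.
  have hb2 : b2 <= b1 by move: l2 n2; rewrite leq_eqVlt ltnS => /orP[/eqP ->|] //.
  have e3 : iter b2 f (rho x) = iter b1.+1 f (rho x) by rewrite e2 iterS e1.
  have lt1 : b1 < b by rewrite ltn_neqAle hb1' hb1.
  pose k := b - b1.+1.
  have : iter (k + b2) f (rho x) = x.
    have -> : iter (k + b2) f (rho x) = iter b f (rho x) by rewrite iterD e3 -iterD /k subnK.
    by rewrite -ex.
  move/bmin; rewrite /k => hle.
  have : b - b1.+1 + b2 < b.
    rewrite -(ltn_add2r b1.+1) addnAC subnK // ltn_add2l; by rewrite ltnS.
  by rewrite ltnNge hle.
pose sp x := ax x = 0 /\ bx (f x) <> (bx x).+1.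
pose c x := if excluded_middle_informative (sp x) then 2 else nat_of_bool (odd (ax x + bx x)).
exists c => x; split.
- rewrite /c; case: (excluded_middle_informative (sp x)) => s0 //; by case: odd.
- rewrite /c; case: (excluded_middle_informative (sp x)) => s1;
    case: (excluded_middle_informative (sp (f x))) => s2 /=.
  + exfalso; case: s1 => h0 hn; case: s2 => h1 hn1; exact: (Lsp x h0 hn hn1).
  + by case: (odd (_ + _)).
  + by case: (odd (_ + _)).
  + case: (posnP (ax x)) => ha.
    * have [a1 [l1 _]] := Lzero x ha.
      have eb : bx (f x) = (bx x).+1 by apply: NNPP => hn; apply: s1; split.
      by rewrite a1 ha eb !add0n oddS; case: odd.
    * have [a1 b1] := Lpos x ha; rewrite a1 b1.
      rewrite -{2}(prednK ha) addSn oddS; by case: odd.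
Qed.

Lemma katetov X (I : (X -> Prop) -> Prop) (hI : maxideal I) (f : X -> X) :
  (forall x, f x <> x) -> forall W, ~ I W -> exists M, I M /\ ~ I (fun x => W x /\ M (f x)).
Proof.
move=> hfp W hW.
have [x0 _] : exists x : X, True.
  case: (mi_max hI (fun _ => True)) => h; first by case: (mi_top hI).
  by have [x _] := mi_ex hI h; exists x.
have [c hc] := coloring (inhabits x0) hfp.
have [j hj] : exists j, ~ I (fun x => W x /\ c x = j).
  apply: NNPP => hno; apply: hW.
  have h0 : I (fun x => W x /\ c x = 0) by apply: NNPP => h; apply: hno; exists 0.
  have h1 : I (fun x => W x /\ c x = 1) by apply: NNPP => h; apply: hno; exists 1.
  have h2 : I (fun x => W x /\ c x = 2) by apply: NNPP => h; apply: hno; exists 2.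
  apply: (mi_down hI _ (mi_un hI h0 (mi_un hI h1 h2))) => x Wx.
  have := (hc x).1; case: (c x) => [|[|[|k]]] //= _; by [left|right;left|right;right].
exists (fun y => c y <> j); split.
- case: (mi_max hI (fun y => c y = j)) => // h; exfalso; apply: hj.
  by apply: (mi_down hI _ h) => x [].
- move=> h; apply: hj; apply: (mi_down hI _ h) => x [Wx cx]; split=> //.
  by rewrite -cx; exact: (hc x).2.
Qed.

Lemma katetov_multi X (I : (X -> Prop) -> Prop) (hI : maxideal I) (phi : nat -> X -> X) :
  (forall j x, phi j x <> x) -> forall m W, ~ I W ->
  exists M, I M /\ ~ I (fun x => W x /\ forall j, j < m -> M (phi j x)).
Proof.
move=> hfp; elim=> [|m IH] W hW.
- have [x0 _] : exists x : X, True.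
    case: (mi_max hI (fun _ => True)) => h; first by case: (mi_top hI).
    by have [x _] := mi_ex hI h; exists x.
  exists (fun y => y = x0); split; first exact: mi_single.
  by move=> h; apply: hW; apply: (mi_down hI _ h) => x Wx; split.
- have [M [hM hW']] := IH W hW.
  have [M' [hM' hW'']] := katetov hI (hfp m) hW'.
  exists (fun y => M y \/ M' y); split; first exact: mi_un.
  move=> h; apply: hW''; apply: (mi_down hI _ h) => x [[Wx HM] HM']; split=> // j.
  rewrite ltnS leq_eqVlt => /orP[/eqP ->|hj]; [by right| by left; apply: HM].
Qed.

Lemma mi_pt X (I : (X -> Prop) -> Prop) (hI : maxideal I) : exists x : X, True.
Proof.
case: (mi_max hI (fun _ => True)) => h; first by case: (mi_top hI).
by have [x _] := mi_ex hI h; exists x.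
Qed.

Lemma mi_other X (I : (X -> Prop) -> Prop) (hI : maxideal I) (x : X) : exists y, y <> x.
Proof. have [y hy] := mi_ex hI (mi_single hI x); by exists y. Qed.

Lemma hyp_bnd_union X (ent : (X -> X -> Prop) -> Prop) (hX : is_ballean ent) n
  (F : hyp_pt ent n -> Prop) : bounded (hyp_ent ent n) F ->
  exists T, bounded ent T /\ forall Y, F Y -> forall y, sval Y y -> T y.
Proof.
move=> [R [C [[E [hE HE]] HC]]].
exists (ballS E (sval C)); split.
- apply: bnd_ball => //; exact: (proj1 (proj2 (proj2_sig C))).
- move=> Y FY y Yy; exact: ((proj1 (HE C Y) (HC Y FY)).2 y Yy).
Qed.

Lemma mk_single X (ent : (X -> X -> Prop) -> Prop) n (c : X) :
  0 < n -> bounded ent (fun y => y = c) -> exists C : hyp_pt ent n, forall y, sval C y <-> y = c.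
Proof.
move=> hn hb.
have p : (exists x, (fun y => y = c) x) /\ bounded ent (fun y => y = c) /\
    exists l : seq X, size l <= n /\ forall x, (fun y => y = c) x <-> List.In x l.
  split; first by exists c.
  split=> //; exists [:: c]; split=> // x; split=> [->|[->|[]]]; by [left|].
pose C : hyp_pt ent n := exist _ (fun y : X => y = c) p.
by exists C.
Qed.

Lemma hyp_bnd_of X (ent : (X -> X -> Prop) -> Prop) (hX : is_ballean ent) n
  (hud : ultradiscrete ent) (hn : 0 < n) (T : X -> Prop) : bounded ent T ->
  bounded (hyp_ent ent n) (fun Y => forall y, sval Y y -> T y).
Proof.
move=> hT; have hI := ud_maxideal hX hud.
have [c _] := mi_pt hI.
have [C hC] := mk_single hn (mi_single hI c).
have [E [hE HE]] := bnd_sq hX (bnd_un hX hT (mi_single hI c)).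
exists (fun A B : hyp_pt ent n => (forall a, sval A a -> ballS E (sval B) a) /\
                                  (forall b, sval B b -> ballS E (sval A) b)), C.
split; first by exists E; split.
move=> Y HY; split.
- move=> a /hC ->; have [y Yy] := proj1 (proj2_sig Y).
  exists y; split=> //; apply: HE; [left; exact: HY| by right].
- move=> b Yb; exists c; split; first exact/hC.
  apply: HE; [by right| left; exact: HY].
Qed.

Lemma size_length T (l : seq T) : size l = List.length l.
Proof. by elim: l => //= a l ->. Qed.

Definition Dset X (ent : (X -> X -> Prop) -> Prop) n (Q : hyp_pt ent n -> Prop) :=
  fun x => exists D, Q D /\ sval D x /\ exists x', sval D x' /\ x' <> x.

Lemma sep X (ent : (X -> X -> Prop) -> Prop) (hX : is_ballean ent) (hud : ultradiscrete ent)
  n (hn : 0 < n) (P Q : hyp_pt ent n -> Prop) :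
  asym_disjoint (hyp_ent ent n) P Q -> bounded ent (Dset Q) ->
  exists U V : hyp_pt ent n -> Prop, asym_nbhd (hyp_ent ent n) U P /\
     asym_nbhd (hyp_ent ent n) V Q /\ (forall y, ~ (U y /\ V y)).
Proof.
move=> hPQ hDQ.
pose V := fun Y : hyp_pt ent n => exists D, Q D /\ (forall y, sval D y <-> sval Y y) /\
   (forall y y', sval D y -> sval D y' -> y = y').
exists (fun Y => ~ V Y), V; split; last split.
- move=> R hR; apply: (bnd_sub _ (hPQ R hR)) => Y [hb /NNPP [D [QD [eD _]]]].
  split=> //; exists D; split=> //.
  have [E [hE HE]] := hR; apply/HE; split.
  + move=> a Da; exists a; split; [exact/eD| exact: (ent_diag hX hE)].
  + move=> b Yb; exists b; split; [exact/eD| exact: (ent_diag hX hE)].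
- move=> R [E [hE HE]].
  have [K [hK HK]] := disc_K hX hud.1 hE.
  apply: (bnd_sub _ (hyp_bnd_of hX hud hn (bnd_un hX (bnd_ball hX hE hDQ) hK))).
  move=> Y [[D [QD RDY]] nV] y Yy.
  have [d [Dd Edy]] := (proj1 (HE D Y) RDY).2 y Yy.
  case: (classic (exists x', sval D x' /\ x' <> d)) => hd.
  + by left; exists d; split=> //; exists D; split=> //; split.
  + have Dsing : forall z, sval D z -> z = d.
      by move=> z Dz; apply: NNPP => nz; apply: hd; exists z.
    case: (HK _ _ Edy) => [edy|[_ Ky]]; last by right.
    subst y.
    case: (classic (exists y', sval Y y' /\ y' <> d)) => hy.
    * have [y' [Yy' ny']] := hy.
      have [d' [Dd' Ey']] := (proj1 (HE D Y) RDY).2 y' Yy'.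
      rewrite (Dsing _ Dd') in Ey'.
      case: (HK _ _ Ey') => [e|[Kd _]]; [by case: ny'| by right].
    * exfalso; apply: nV; exists D; split=> //; split.
      -- move=> z; split=> [/Dsing ->|Yz] //.
         by have -> : z = d by apply: NNPP => nz; apply: hy; exists z.
      -- by move=> z z' /Dsing -> /Dsing ->.
- by move=> Y [].
Qed.

Lemma choose_phi X (ent : (X -> X -> Prop) -> Prop) n (F : hyp_pt ent n -> Prop) (x0 : X)
  (hother : forall x : X, exists y, y <> x) :
  exists phi : nat -> X -> X, (forall j x, phi j x <> x) /\
   forall x, Dset F x -> exists A, F A /\ sval A x /\ (exists y, sval A y /\ y <> x) /\
     forall a, sval A a -> a <> x -> exists j, j < n /\ phi j x = a.
Proof.
pose inh := inhabits x0.
pose Sa x (l : seq X) := exists A, F A /\ (forall y, sval A y <-> List.In y l) /\ sval A x /\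
   (exists y, sval A y /\ y <> x) /\ size l <= n.
pose la x := epsilon (inhabits [::]) (Sa x).
pose phi j x := epsilon inh (fun y => y <> x /\ (List.nth j (la x) x <> x -> y = List.nth j (la x) x)).
have phiP : forall j x, phi j x <> x /\ (List.nth j (la x) x <> x -> phi j x = List.nth j (la x) x).
  move=> j x; apply: (epsilon_spec inh (fun y => y <> x /\ (List.nth j (la x) x <> x -> y = List.nth j (la x) x))).
  case: (classic (List.nth j (la x) x <> x)) => h.
  - by exists (List.nth j (la x) x).
  - have [y hy] := hother x; exists y; split=> // h'; by case: h.
exists phi; split; first by move=> j x; exact: (phiP j x).1.
move=> x [D [FD [Dx [x' [Dx' nx']]]]].
have hS : Sa x (la x).
  apply: (epsilon_spec (inhabits [::]) (Sa x)).
  have [l [hl Hl]] := proj2 (proj2 (proj2_sig D)).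
  exists l, D; split=> //; split=> //; split=> //; split=> //; by exists x'.
have [A [FA [HA [Ax [hy hsz]]]]] := hS.
exists A; split=> //; split=> //; split=> // a Aa nax.
have [j [hj ej]] := List.In_nth (la x) a x (proj1 (HA a) Aa).
exists j; split.
- apply: leq_trans hsz; rewrite size_length; exact/ltP.
- by rewrite (phiP j x).2 ej.
Qed.

Lemma part2 X (ent : (X -> X -> Prop) -> Prop) (hX : is_ballean ent)
  (hud : ultradiscrete ent) (n : nat) (hn : 2 <= n) : normal (hyp_ent ent n).
Proof.
move=> P Q hPQ.
have hI := ud_maxideal hX hud.
have [x0 _] := mi_pt hI.
have hn0 : 0 < n by apply: leq_trans hn.
have key : bounded ent (fun x => Dset P x /\ Dset Q x).
  apply: NNPP => hW.
  have [phi [hphi Hphi]] := choose_phi P x0 (mi_other hI).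
  have [psi [hpsi Hpsi]] := choose_phi Q x0 (mi_other hI).
  have [M1 [hM1 hW1]] := katetov_multi hI hphi n hW.
  have [M2 [hM2 hW2]] := katetov_multi hI hpsi n hW1.
  have [E [hE HE]] := bnd_sq hX (bnd_un hX hM1 hM2).
  pose R := fun A B : hyp_pt ent n => (forall a, sval A a -> ballS E (sval B) a) /\
                                      (forall b, sval B b -> ballS E (sval A) b).
  have hR : hyp_ent ent n R by exists E; split.
  have [T [hT HT]] := hyp_bnd_union hX (hPQ R hR).
  apply: hW2; apply: (mi_down hI _ (mi_un hI hT (mi_un hI hM1 hM2))) => x [[[Px Qx] H1] H2].
  case: (classic (M1 x \/ M2 x)) => hMx; [by right|left].
  have [A [PA [Ax [[y [Ay yx]] HA]]]] := Hphi x Px.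
  have [D [QD [Dx [[y' [Dy' yx']] HD]]]] := Hpsi x Qx.
  have My : M1 y \/ M2 y by have [j [hj <-]] := HA y Ay yx; left; apply: H1.
  have My' : M1 y' \/ M2 y' by have [j [hj <-]] := HD y' Dy' yx'; right; apply: H2.
  apply: (HT A _ x Ax); split.
  - exists A; split=> //; split=> a Aa; exists a; split=> //; exact: (ent_diag hX hE).
  - exists D; split=> //; split.
    + move=> d Dd; case: (classic (d = x)) => [->|ndx].
      * by exists x; split=> //; exact: (ent_diag hX hE).
      * exists y; split=> //; apply: HE => //.
        by have [j [hj <-]] := HD d Dd ndx; right; apply: H2.
    + move=> a Aa; case: (classic (a = x)) => [->|nax].
      * by exists x; split=> //; exact: (ent_diag hX hE).
      * exists y'; split=> //; apply: HE => //.
        by have [j [hj <-]] := HA a Aa nax; left; apply: H1.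
have [hDP|hDQ] : bounded ent (Dset P) \/ bounded ent (Dset Q).
  case: (mi_max hI (fun x => Dset P x /\ ~ (Dset P x /\ Dset Q x))) => h.
  - left; apply: (mi_down hI _ (mi_un hI h key)) => x Px.
    case: (classic (Dset Q x)) => hq; [by right | by left; split=> // [[_ h']]].
  - right; apply: (mi_down hI _ (mi_un hI h key)) => x Qx.
    case: (classic (Dset P x)) => hp; [by right| by left; case].
- have hQP : asym_disjoint (hyp_ent ent n) Q P.
    by move=> R hR; apply: (bnd_sub _ (hPQ R hR)) => Y [a b].
  have [U [V [hU [hV hUV]]]] := sep hX hud hn0 hQP hDP.
  exists V, U; split=> //; split=> // y [a b]; exact: (hUV y (conj b a)).
- exact: sep.
Qed.

Lemma part1 X (ent : (X -> X -> Prop) -> Prop) (hX : is_ballean ent)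
  (hud : ultradiscrete ent) (n : nat) (hn : 2 <= n) : ~ normal (power_ent ent n).
Proof.
have hI := ud_maxideal hX hud.
have [x0 _] : exists x : X, True.
  case: (mi_max hI (fun _ => True)) => h; first by case: (mi_top hI).
  by have [x _] := mi_ex hI h; exists x.
have h0 : 0 < n by apply: leq_trans hn.
pose i0 := Ordinal h0. pose i1 := Ordinal hn.
have i01 : i0 != i1 by [].
pose pt (z y : X) := fun i : 'I_n => if i == i0 then z else if i == i1 then y else x0.
have pt0 : forall z y, pt z y i0 = z by move=> z y; rewrite /pt eqxx.
have pt1 : forall z y, pt z y i1 = y by move=> z y; rewrite /pt eq_sym (negbTE i01) eqxx.
pose A := fun x : 'I_n -> X => forall i, i != i0 -> x i = x0.
pose B := fun x : 'I_n -> X => forall i, i != i1 -> x i = x0.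
move=> hnorm.
have hAB : asym_disjoint (power_ent ent n) A B.
  move=> R [Es [hEs HEs]]; exists R, (fun _ => x0); split; first by exists Es.
  move=> y [[a [Aa Ray]] [b [Bb Rby]]]; apply/HEs => i.
  case e : (i == i0).
  - have hi1 : i != i1 by rewrite (eqP e).
    by rewrite -(Bb i hi1); exact: (proj1 (HEs b y) Rby i).
  - by rewrite -(Aa i (negbT e)); exact: (proj1 (HEs a y) Ray i).
have [U [V [hU [hV hUV]]]] := hnorm A B hAB.
have mkR : forall K, bounded ent K -> exists D, ent D /\ (forall k, K k -> D x0 k) /\
    power_ent ent n (fun u v => forall i, D (u i) (v i)).
  move=> K hK; have [D [hD HD]] := bnd_at hX x0 hK.
  by exists D; split=> //; split=> //; exists (fun _ => D).
have Ufact : forall K, bounded ent K -> exists L, bounded ent L /\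
    forall z y, K y -> ~ U (pt z y) -> L z.
  move=> K hK; have [D [hD [HD hR]]] := mkR K hK.
  have [R' [c [[Es [hEs HEs]] Hc]]] := hU _ hR.
  exists (Es i0 (c i0)); split; first exact: bnd_E.
  move=> z y Ky nU.
  have hb : ballS (fun u v => forall i, D (u i) (v i)) A (pt z y).
    exists (pt z x0); split.
    - move=> i hi; rewrite /pt (negbTE hi); by case: (i == i1).
    - move=> i; rewrite /pt; case: (i == i0); first exact: (ent_diag hX hD).
      case: (i == i1); [exact: HD | exact: (ent_diag hX hD)].
  have := proj1 (HEs c (pt z y)) (Hc _ (conj hb nU)) i0.
  by rewrite pt0.
have Vfact : forall K, bounded ent K -> exists L, bounded ent L /\
    forall z y, K z -> ~ V (pt z y) -> L y.
  move=> K hK; have [D [hD [HD hR]]] := mkR K hK.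
  have [R' [c [[Es [hEs HEs]] Hc]]] := hV _ hR.
  exists (Es i1 (c i1)); split; first exact: bnd_E.
  move=> z y Kz nV.
  have hb : ballS (fun u v => forall i, D (u i) (v i)) B (pt z y).
    exists (pt x0 y); split.
    - move=> i hi; rewrite /pt (negbTE hi); by case: (i == i0).
    - move=> i; rewrite /pt; case: (i == i0); first exact: HD.
      case: (i == i1); exact: (ent_diag hX hD).
  have := proj1 (HEs c (pt z y)) (Hc _ (conj hb nV)) i1.
  by rewrite pt1.
apply: (tournament hI (Rel := fun a b => ~ U (pt b a) \/ ~ V (pt a b))).
- move=> y z; case: (classic (U (pt z y))) => hu.
  + right; right => hv; exact: (hUV _ (conj hu hv)).
  + by left; left.
- move=> K hK; have [L1 [hL1 HL1]] := Ufact K hK; have [L2 [hL2 HL2]] := Vfact K hK.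
  apply: (bnd_sub _ (bnd_un hX hL1 hL2)) => b [a [Ka [h|h]]].
  + by left; apply: (HL1 b a).
  + by right; apply: (HL2 a b).
Qed.

Theorem theorem1p10 (X : Type) (ent : (X -> X -> Prop) -> Prop)
  (hX : is_ballean ent) (hud : ultradiscrete ent) (n : nat) (hn : 2 <= n) :
  ~ normal (power_ent ent n) /\ normal (hyp_ent ent n).
Proof.
split; [exact: part1 | exact: part2].
Qed.
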